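(* For any complex numbers $a,b,\alpha,\beta$ with $\beta a-\alpha b\neq0$ and any natural number $n\ge1$, \[ \sum_{r=0}^{\lfloor n/2\rfloor}\Psi\left(\begin{array}{cc|c} a & b & n \\ \alpha & \beta & r \end{array}\right)=\Psi(a-\alpha,b-\beta,n),\qquad \sum_{r=0}^{\lfloor (n-1)/2\rfloor}\Phi\left(\begin{array}{cc|c} a & b & n \\ \alpha & \beta & r \end{array}\right)=\Phi(a-\alpha,b-\beta,n). \]
   Context: $\delta(m)=1$ for $m$ odd, $0$ for $m$ even; $\lfloor\cdot\rfloor$ is the floor. $\Psi(a,b,n)$, $\Phi(a,b,n)$ are defined by $\Psi(a,b,0)=2$, $\Psi(a,b,1)=1$, $\Psi(a,b,n+1)=(2a-b)^{\delta(n)}\Psi(a,b,n)-a\Psi(a,b,n-1)$ and $\Phi(a,b,0)=0$, $\Phi(a,b,1)=1$, $\Phi(a,b,n+1)=(2a-b)^{\delta(n+1)}\Phi(a,b,n)-a\Phi(a,b,n-1)$. For $n\ge1$ and numbers with $\beta a-\alpha b\ne0$, $\Psi\left(\begin{array}{cc|c} a & b & n \\ \alpha & \beta & r \end{array}\right)$ ($0\le r\le\lfloor n/2\rfloor$) and $\Phi\left(\begin{array}{cc|c} a & b & n \\ \alpha & \beta & r \end{array}\right)$ ($0\le r\le\lfloor (n-1)/2\rfloor$) are the unique numbers such that, identically in $x,y$, $(\beta a-\alpha b)^{\lfloor n/2\rfloor}\frac{x^n+y^n}{(x+y)^{\delta(n)}}=\sum_{r}\Psi\left(\begin{array}{cc|c}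 a & b & n \\ \alpha & \beta & r \end{array}\right)(\alpha x^2+\beta xy+\alpha y^2)^{\lfloor n/2\rfloor-r}(ax^2+bxy+ay^2)^r$ and $(\beta a-\alpha b)^{\lfloor (n-1)/2\rfloor}\frac{x^n-y^n}{(x-y)(x+y)^{\delta(n-1)}}=\sum_{r}\Phi\left(\begin{array}{cc|c} a & b & n \\ \alpha & \beta & r \end{array}\right)(\alpha x^2+\beta xy+\alpha y^2)^{\lfloor (n-1)/2\rfloor-r}(ax^2+bxy+ay^2)^r$. *)

(* Defs.v *)
From HB Require Import structures.
From mathcomp Require Import all_boot all_order all_algebra.
From mathcomp Require Import complex.
From mathcomp Require Import Rstruct.
From Stdlib Require Import Reals.
Set Implicit Arguments. Unset Strict Implicit. Unset Printing Implicit Defensive.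
Import Order.TTheory GRing.Theory Num.Theory.
Local Open Scope ring_scope.

Notation C := (complex R).

(* delta(m) = odd m (bool coerced to nat), floor(m/2) = m./2 *)

(* (Psi(a,b,n), Psi(a,b,n+1)) *)
Fixpoint Psi_pair (a b : C) (n : nat) : C * C :=
  match n with
  | 0 => (2, 1)
  | n'.+1 => let (p, q) := Psi_pair a b n' in
             (q, (2 * a - b) ^+ (odd n'.+1) * q - a * p)
  end.
Definition Psi (a b : C) (n : nat) : C := (Psi_pair a b n).1.

(* (Phi(a,b,n), Phi(a,b,n+1)) *)
Fixpoint Phi_pair (a b : C) (n : nat) : C * C :=
  match n with
  | 0 => (0, 1)
  | n'.+1 => let (p, q) := Phi_pair a b n' in
             (q, (2 * a - b) ^+ (odd n'.+2) * q - a * p)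
  end.
Definition Phi (a b : C) (n : nat) : C := (Phi_pair a b n).1.

Definition qf (u v : C) (x y : C) : C := u * x ^+ 2 + v * x * y + u * y ^+ 2.

(* c 0, ..., c (n./2) are the numbers Psi[a b n; al be r] : the identity holds
   identically in x, y (as rational functions, i.e. wherever the denominator
   does not vanish). *)
Definition IsPsiCoeffs (a b al be : C) (n : nat) (c : nat -> C) : Prop :=
  forall x y : C, (x + y) ^+ (odd n) != 0 ->
    (be * a - al * b) ^+ (n./2) * ((x ^+ n + y ^+ n) / (x + y) ^+ (odd n))
    = \sum_(r < (n./2).+1)
        c r * qf al be x y ^+ (n./2 - r) * qf a b x y ^+ r.

Definition IsPhiCoeffs (a b al be : C) (n : nat) (c : nat -> C) : Prop :=
  forall x y : C, (x - y) * (x + y) ^+ (odd n.-1) != 0 ->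
    (be * a - al * b) ^+ (n.-1./2) *
      ((x ^+ n - y ^+ n) / ((x - y) * (x + y) ^+ (odd n.-1)))
    = \sum_(r < (n.-1./2).+1)
        c r * qf al be x y ^+ (n.-1./2 - r) * qf a b x y ^+ r.

(* Main.v *)
Require Import Defs.
From HB Require Import structures.
From mathcomp Require Import all_boot all_order all_algebra.
From mathcomp Require Import complex Rstruct.
From mathcomp Require Import ring.
Import Order.TTheory GRing.Theory Num.Theory.
Local Open Scope ring_scope.


Lemma poly_zero_off (P : {poly C}) :
  (forall x : C, x != 1 -> x != -1 -> P.[x] = 0) -> P = 0.
Proof.
move=> H; apply/eqP; apply/negPn/negP => nz.
pose rs := [seq (i.+2)%:R : C | i <- iota 0 (size P)].
suff: (size rs < size P)%N by rewrite size_map size_iota ltnn.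
apply: max_poly_roots nz _ _.
  apply/allP => z /mapP [i _ ->]; apply/rootP; apply: H.
    by rewrite (eqr_nat C i.+2 1).
  apply/negP => /eqP e.
  have : ((i.+3)%:R : C) == 0 by rewrite -addn1 natrD e addNr.
  by rewrite pnatr_eq0.
rewrite map_inj_uniq ?iota_uniq // => i j /eqP; rewrite eqr_nat => /eqP [] //.
Qed.

Lemma psi_rec a b n : Psi a b n.+2 = (2 * a - b) ^+ (odd n.+1) * Psi a b n.+1 - a * Psi a b n.
Proof. rewrite /Psi /=; by case: (Psi_pair a b n). Qed.
Lemma phi_rec a b n : Phi a b n.+2 = (2 * a - b) ^+ (odd n.+2) * Phi a b n.+1 - a * Phi a b n.
Proof. rewrite /Phi /=; by case: (Phi_pair a b n). Qed.

Fixpoint PsiP_pair n : {poly C} * {poly C} :=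
  match n with 0 => (2%:P, 1) | n'.+1 => let (p, q) := PsiP_pair n' in
    (q, (('X + 1) ^+ 2) ^+ (odd n'.+1) * q - 'X * p) end.
Fixpoint PhiP_pair n : {poly C} * {poly C} :=
  match n with 0 => (0, 1) | n'.+1 => let (p, q) := PhiP_pair n' in
    (q, (('X + 1) ^+ 2) ^+ (odd n'.+2) * q - 'X * p) end.
Definition g x n := (PsiP_pair n).1.[x].
Definition h x n := (PhiP_pair n).1.[x].

Lemma g_rec x n : g x n.+2 = ((x + 1) ^+ 2) ^+ (odd n.+1) * g x n.+1 - x * g x n.
Proof.
rewrite /g /=; case: (PsiP_pair n) => p q /=.
by rewrite hornerD hornerN !hornerM !horner_exp hornerD hornerX hornerC.
Qed.
Lemma h_rec x n : h x n.+2 = ((x + 1) ^+ 2) ^+ (odd n.+2) * h x n.+1 - x * h x n.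
Proof.
rewrite /h /=; case: (PhiP_pair n) => p q /=.
by rewrite hornerD hornerN !hornerM !horner_exp hornerD hornerX hornerC.
Qed.
Lemma g0 x : g x 0 = 2. Proof. by rewrite /g /= hornerC. Qed.
Lemma g1 x : g x 1 = 1. Proof. by rewrite /g /= hornerC. Qed.
Lemma h0 x : h x 0 = 0. Proof. by rewrite /h /= hornerC. Qed.
Lemma h1 x : h x 1 = 1. Proof. by rewrite /h /= hornerC. Qed.


Lemma g_id x n : (x + 1) ^+ (odd n) * g x n = x ^+ n + 1.
Proof.
suff: (x + 1) ^+ (odd n) * g x n = x ^+ n + 1 /\
      (x + 1) ^+ (odd n.+1) * g x n.+1 = x ^+ n.+1 + 1 by case.
elim: n => [|n [IH0 IH1]]; first by rewrite g0 g1 /= expr0 mul1r expr1 mulr1.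
split=> //; rewrite g_rec; move: IH0 IH1 => /=; case: (odd n) => /= IH0 IH1.
- transitivity ((x+1) * ((x+1)^+0 * g x n.+1) - x * ((x+1)^+1 * g x n)); first by ring.
  rewrite IH0 IH1 !exprS; ring.
- transitivity ((x+1) * ((x+1)^+1 * g x n.+1) - x * ((x+1)^+0 * g x n)); first by ring.
  rewrite IH0 IH1 !exprS; ring.
Qed.

Lemma h_id x n : (x - 1) * (x + 1) ^+ (odd n) * h x n.+1 = x ^+ n.+1 - 1.
Proof.
suff: (x - 1) * (x + 1) ^+ (odd n) * h x n.+1 = x ^+ n.+1 - 1 /\
      (x - 1) * (x + 1) ^+ (odd n.+1) * h x n.+2 = x ^+ n.+2 - 1 by case.
elim: n => [|n [IH0 IH1]].
  rewrite h_rec h1 h0 /= expr0 !mulr1 mulr0 subr0 expr1 mulr1; split=> //; ring.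
split=> //; rewrite h_rec; move: IH0 IH1 => /=; case: (odd n) => /= IH0 IH1.
- transitivity ((x+1) * ((x-1) * (x+1)^+0 * h x n.+2) - x * ((x-1) * (x+1)^+1 * h x n.+1)); first by ring.
  rewrite IH0 IH1 !exprS; ring.
- transitivity ((x+1) * ((x-1) * (x+1)^+1 * h x n.+2) - x * ((x-1) * (x+1)^+0 * h x n.+1)); first by ring.
  rewrite IH0 IH1 !exprS; ring.
Qed.

Lemma g_psi (A B x l : C) n : l * x = A -> l * (x + 1) ^+ 2 = 2 * A - B ->
  l ^+ (n./2) * g x n = Psi A B n.
Proof.
move=> hx hs.
suff: l ^+ (n./2) * g x n = Psi A B n /\ l ^+ (n.+1./2) * g x n.+1 = Psi A B n.+1 by case.
elim: n => [|n [IH0 IH1]]; first by rewrite g0 g1 /Psi /= !expr0 !mul1r.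
split=> //; rewrite g_rec psi_rec -IH0 -IH1 -hs -hx.
have -> : (n.+2)./2 = (n./2).+1 by [].
rewrite -uphalfE uphalf_half /=; case: (odd n) => /=.
- rewrite ?expr0 ?expr1 !exprS; ring.
- rewrite ?expr0 ?expr1 !exprS; ring.
Qed.

Lemma h_phi (A B x l : C) n : l * x = A -> l * (x + 1) ^+ 2 = 2 * A - B ->
  l ^+ (n./2) * h x n.+1 = Phi A B n.+1.
Proof.
move=> hx hs.
suff: l ^+ (n./2) * h x n.+1 = Phi A B n.+1 /\ l ^+ (n.+1./2) * h x n.+2 = Phi A B n.+2 by case.
elim: n => [|n [IH0 IH1]].
  rewrite h_rec phi_rec h1 h0 /Phi /= !expr0 !mul1r !mulr0 !subr0; split=> //.
split=> //; rewrite h_rec phi_rec -IH0 -IH1 -hs -hx.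
have -> : (n.+2)./2 = (n./2).+1 by [].
rewrite -uphalfE uphalf_half /=; case: (odd n) => /=.
- rewrite ?expr0 ?expr1 !exprS; ring.
- rewrite ?expr0 ?expr1 !exprS; ring.
Qed.


Definition QP (u v : C) : {poly C} := u%:P * 'X^2 + v%:P * 'X + u%:P.
Lemma QPE u v x : (QP u v).[x] = qf u v x 1.
Proof. by rewrite /QP /qf !hornerD !hornerM !hornerC ?hornerXn ?horner_exp !hornerX expr1n !mulr1. Qed.

Lemma ext_ident (Gp : {poly C}) k (c : nat -> C) al be a b D :
 (forall x, x != 1 -> x != -1 -> D^+k * Gp.[x] =
    \sum_(r < k.+1) c r * qf al be x 1 ^+ (k - r) * qf a b x 1 ^+ r) ->
 forall x, D^+k * Gp.[x] =
    \sum_(r < k.+1) c r * qf al be x 1 ^+ (k - r) * qf a b x 1 ^+ r.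
Proof.
move=> H.
pose P := (D^+k)%:P * Gp - \sum_(r < k.+1) (c r)%:P * (QP al be)^+(k - r) * (QP a b)^+r.
have ev x : P.[x] = D^+k * Gp.[x] - \sum_(r < k.+1) c r * qf al be x 1 ^+ (k - r) * qf a b x 1 ^+ r.
  rewrite /P hornerD hornerN hornerM hornerC horner_sum; congr (_ - _).
  by apply: eq_bigr => r _; rewrite !hornerM !horner_exp hornerC !QPE.
have P0 : P = 0.
  by apply: poly_zero_off => x h1 h2; rewrite ev H // subrr.
move=> x; have := ev x; rewrite P0 horner0 => /esym /eqP.
by rewrite subr_eq0 => /eqP.
Qed.

Lemma finish k (c : nat -> C) (l t G : C) : t != 0 ->
  (l * t) ^+ k * G = \sum_(r < k.+1) c r * t ^+ (k - r) * t ^+ r ->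
  \sum_(r < k.+1) c r = l ^+ k * G.
Proof.
move=> tn E.
have tk : t ^+ k != 0 by rewrite expf_neq0.
apply: (mulfI tk).
rewrite mulrA -exprMn (mulrC t) E mulr_sumr.
apply: eq_bigr => r _.
have rk : (r <= k)%N by rewrite -ltnS.
by rewrite -mulrA -exprD subnK // mulrC.
Qed.


Lemma exists_xl (A B : C) : exists x l, l * x = A /\ l * (x + 1) ^+ 2 = 2 * A - B.
Proof.
have [->|A0] := eqVneq A 0.
  by exists 0, (-B); rewrite mulr0 add0r expr1n mulr1 mulr0 add0r.
pose r := sqrtC (B ^+ 2 - 4 * A ^+ 2).
pose x := (- B + r) / (2 * A).
have two : (2 : C) != 0 by rewrite pnatr_eq0.
have four : (4 : C) != 0 by rewrite pnatr_eq0.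
have q : A * x ^+ 2 + B * x + A = 0.
  have rE : r ^+ 2 = B ^+ 2 - 4 * A ^+ 2 by rewrite sqrtCK.
  have -> : A * x ^+ 2 + B * x + A = (r ^+ 2 - (B ^+ 2 - 4 * A ^+ 2)) / (4 * A).
    rewrite /x; field; by rewrite ?A0 ?two ?four.
  by rewrite rE subrr mul0r.
have xn : x != 0.
  apply: contraNneq A0 => x0; apply/eqP; rewrite -q x0; ring.
exists x, (A / x); split; first by rewrite divfK.
have -> : A / x * (x + 1) ^+ 2 = (A * x ^+ 2 + B * x + A + (2 * A - B) * x) / x by field.
by rewrite q add0r mulfK.
Qed.


Theorem theorem10p3 (a b al be : C) (n : nat) :
  be * a - al * b != 0 -> (1 <= n)%N ->
  (forall c : nat -> C, IsPsiCoeffs a b al be n c ->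
     \sum_(r < (n./2).+1) c r = Psi (a - al) (b - be) n) /\
  (forall c : nat -> C, IsPhiCoeffs a b al be n c ->
     \sum_(r < (n.-1./2).+1) c r = Phi (a - al) (b - be) n).
Proof.
case: n => // m Dn _.
have [x [l [hx hs]]] := exists_xl (a - al) (b - be).
have ht1 : qf al be x 1 = qf a b x 1.
  apply/eqP; rewrite eq_sym -subr_eq0.
  rewrite (_ : qf a b x 1 - qf al be x 1 =
     (a - al) * (x + 1) ^+ 2 - (2 * (a - al) - (b - be)) * x); last by rewrite /qf; ring.
  by rewrite -hs -hx; apply/eqP; ring.
have hlt : l * qf a b x 1 = be * a - al * b.
  rewrite (_ : l * qf a b x 1 = a * (l * (x + 1) ^+ 2) + (b - 2 * a) * (l * x)); last by rewrite /qf; ring.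
  by rewrite hs hx; ring.
have tn : qf a b x 1 != 0.
  by apply: contraNneq Dn => t0; apply/eqP; rewrite -hlt t0 mulr0.
split=> c Hc.
- have E : (be * a - al * b) ^+ (m.+1./2) * (PsiP_pair m.+1).1.[x] =
    \sum_(r < (m.+1./2).+1) c r * qf al be x 1 ^+ (m.+1./2 - r) * qf a b x 1 ^+ r.
    2: {
    rewrite ht1 -hlt in E.
    by rewrite (finish _ _ _ _ _ tn E) (g_psi _ _ _ _ _ hx hs). }
  apply: ext_ident => y y1 ym1.
  have nz : (y + 1) ^+ odd m.+1 != 0 by rewrite expf_neq0 // addr_eq0.
  rewrite -(Hc y 1 nz) expr1n; congr (_ * _).
  by rewrite -(g_id y m.+1) mulrC mulKf.
- have E : (be * a - al * b) ^+ (m./2) * (PhiP_pair m.+1).1.[x] =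
    \sum_(r < (m./2).+1) c r * qf al be x 1 ^+ (m./2 - r) * qf a b x 1 ^+ r.
    2: {
    rewrite ht1 -hlt in E.
    by rewrite (finish _ _ _ _ _ tn E) (h_phi _ _ _ _ _ hx hs). }
  apply: ext_ident => y y1 ym1.
  have nz : (y - 1) * (y + 1) ^+ odd m != 0.
    by apply: mulf_neq0; [rewrite subr_eq0 | rewrite expf_neq0 // addr_eq0].
  rewrite -(Hc y 1 nz) expr1n; congr (_ * _).
  by rewrite -(h_id y m) mulrC mulKf.
Qed.
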